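(* Let $D$ be an Eulerian digraph (finite, without loops, parallel arcs or digons), let $\mathcal{F}(D)$ be a cycle decomposition of $D$ with associated dicycle intersection graph $CI(D)$, and let $\hat v\in V(CI(D))$ correspond to the dicycle $C_{\hat v}\in\mathcal{F}(D)$. Suppose the subgraph $CI(D)[N[\hat v]]$ of $CI(D)$ induced by the closed neighbourhood $N[\hat v]$ (i.e. $\hat v$ together with all dicycles of $\mathcal{F}(D)$ sharing a vertex with $C_{\hat v}$) is a simple block graph (it has no parallel edges and every block of it is a complete graph). Then $V(C_{\hat v})\subseteq SV(D)$; in particular $SV(D)\neq\emptyset$.
   Context: All digraphs are finite, with no loops, no parallel arcs and no digons (a digon is a pair of arcs $u\to w$, $w\to u$), so every dicycle has length at least $3$. $N^{+}(v)$ is the set of out-neighbours of $v$; $N^{+2}(v)$ is the set of vertices $w\notin N^{+}(v)\cup\{v\}$ such that $u\to w$ is an arc for some $u\in N^{+}(v)$; $SV(D)$ is the set of vertices $v$ with $|N^{+2}(v)|\ge|N^{+}(v)|$. An Eulerian digraph is a (weakly) connected digraph with $d^{+}(x)=d^{-}(x)$ for all vertices $x$. A cycle decomposition $\mathcal{F}(D)$ is a set of dicycles whose arc sets partition $A(D)$. The dicycle intersection graph $CI(D)$ associated with $\mathcal{F}(D)$ is the multigraph with vertex set $\mathcal{F}(D)$ having, for each pair of distinct dicycles $C,C'$ and each vertex of $D$ lying on both, one edge between $C$ and $C'$. A block of a graph is a maximal 2-connected subgraph or a bridge/isolated vertex. *)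

(* Defs.v *)
From mathcomp Require Import all_boot.
Unset Printing Implicit Defensive.

(* A digraph on the finite vertex type T with arc relation a (a x y : arc x -> y).
   A relation rules out parallel arcs automatically. *)
Definition simple_digraph (T : finType) (a : rel T) : Prop :=
  (forall x, ~~ a x x) /\ (forall x y, a x y -> ~~ a y x).

Definition outdeg (T : finType) (a : rel T) (x : T) : nat := #|[set y | a x y]|.
Definition indeg (T : finType) (a : rel T) (x : T) : nat := #|[set y | a y x]|.

Definition weakly_connected (T : finType) (a : rel T) : Prop :=
  forall x y : T, connect [rel u v | a u v || a v u] x y.

Definition eulerian (T : finType) (a : rel T) : Prop :=
  weakly_connected T a /\ forall x, outdeg T a x = indeg T a x.

Definition dicycle (T : finType) (a : rel T) (c : seq T) : Prop :=
  [/\ c != [::], uniq c & cycle a c].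

Definition cyc_arc (T : finType) (c : seq T) (x y : T) : bool :=
  (x \in c) && (next c x == y).

Definition cycle_decomposition (T : finType) (a : rel T) (F : seq (seq T)) : Prop :=
  (forall c, c \in F -> dicycle T a c) /\
  (forall i j, i < size F -> j < size F -> i != j ->
     forall x y, ~~ (cyc_arc T (nth [::] F i) x y && cyc_arc T (nth [::] F j) x y)) /\
  (forall x y, a x y -> exists2 c, c \in F & cyc_arc T c x y).

Definition Nout (T : finType) (a : rel T) (v : T) : {set T} := [set w | a v w].
Definition Nout2 (T : finType) (a : rel T) (v : T) : {set T} :=
  [set w | (w \notin Nout T a v) && (w != v) && [exists u in Nout T a v, a u w]].
Definition SV (T : finType) (a : rel T) : {set T} :=
  [set v | #|Nout T a v| <= #|Nout2 T a v|].

(* The dicycle intersection graph CI(D): vertices are indices 'I_(size F);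
   the number of edges between distinct i, j is the number of common vertices. *)
Definition ci_mult (T : finType) (F : seq (seq T)) (i j : 'I_(size F)) : nat :=
  if i == j then 0
  else #|[pred v : T | (v \in nth [::] F i) && (v \in nth [::] F j)]|.

Definition ci_adj (T : finType) (F : seq (seq T)) : rel 'I_(size F) :=
  fun i j => 0 < ci_mult T F i j.

Definition closed_nbhd (T : finType) (F : seq (seq T)) (k : 'I_(size F))
  : {set 'I_(size F)} := [set j | (j == k) || ci_adj T F k j].

(* the subgraph induced by S is connected (vacuous for the empty set) *)
Definition induced_connected (I : finType) (e : rel I) (S : {set I}) : Prop :=
  forall x y, x \in S -> y \in S ->
    connect [rel u v | [&& u \in S, v \in S & e u v]] x y.

(* induced subgraph on B is nonseparable: nonempty, connected, no cut vertex
   (this covers K1, K2 and 2-connected graphs) *)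
Definition nonseparable (I : finType) (e : rel I) (B : {set I}) : Prop :=
  B != set0 /\ induced_connected I e B /\
  (forall v, v \in B -> induced_connected I e (B :\ v)).

(* a block of the subgraph induced by S: a maximal nonseparable subgraph
   (blocks are induced subgraphs, so they are determined by vertex sets) *)
Definition is_block (I : finType) (e : rel I) (S B : {set I}) : Prop :=
  [/\ B \subset S, nonseparable I e B &
      forall B' : {set I}, B \subset B' -> B' \subset S -> nonseparable I e B' -> B' = B].

Definition every_block_complete (I : finType) (e : rel I) (S : {set I}) : Prop :=
  forall B, is_block I e S B ->
    forall x y, x \in B -> y \in B -> x != y -> e x y.

Definition simple_block_graph_nbhd (T : finType) (F : seq (seq T)) (k : 'I_(size F))
  : Prop :=
  (forall i j, i \in closed_nbhd T F k -> j \in closed_nbhd T F k ->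
     ci_mult T F i j <= 1) /\
  every_block_complete _ (ci_adj T F) (closed_nbhd T F k).

(* Main.v *)
Require Import Defs.
From mathcomp Require Import all_boot.

Set Implicit Arguments.
Section Aux.
Variables (T : finType) (a : rel T) (F : seq (seq T)) (k : 'I_(size F)).

Lemma inN_aux (i : 'I_(size F)) v :
  v \in nth [::] F k -> v \in nth [::] F i -> i \in closed_nbhd T F k.
Proof.
move=> Hk Hi; rewrite inE; case: eqP => //= /eqP Hne.
rewrite /ci_adj /ci_mult eq_sym (negbTE Hne).
apply/card_gt0P; exists v; by rewrite inE /= Hk Hi.
Qed.

Lemma uniq_idx_aux (i j : 'I_(size F)) x y :
  (forall i j, i \in closed_nbhd T F k -> j \in closed_nbhd T F k ->
     ci_mult T F i j <= 1) ->
  i \in closed_nbhd T F k -> j \in closed_nbhd T F k -> x != y ->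
  x \in nth [::] F i -> y \in nth [::] F i ->
  x \in nth [::] F j -> y \in nth [::] F j -> i = j.
Proof.
move=> Hm Hi Hj Hxy xi yi xj yj; apply/eqP; apply/negPn/negP => Hne.
have := Hm i j Hi Hj; rewrite /ci_mult (negbTE Hne).
have : [set x; y] \subset [pred v : T | (v \in nth [::] F i) && (v \in nth [::] F j)].
  by apply/subsetP => z; rewrite !inE => /orP[] /eqP ->; rewrite /= ?xi ?xj ?yi ?yj.
move/subset_leq_card; rewrite cards2 Hxy => H1 H2.
by have := leq_trans H1 H2.
Qed.
End Aux.

Theorem mainTheorem6 (T : finType) (a : rel T) (F : seq (seq T))
  (k : 'I_(size F)) :
  simple_digraph T a -> eulerian T a -> cycle_decomposition T a F ->
  simple_block_graph_nbhd T F k ->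
  {subset nth [::] F k <= SV T a} /\ SV T a != set0.
Proof.
move=> [Hloop Hasym] _ [Hdic [_ Hcov]] [Hm _].
have Hcyc : forall i : 'I_(size F), dicycle T a (nth [::] F i).
  by move=> i; apply: Hdic; apply: mem_nth.
have Hex : forall x y, a x y -> exists i : 'I_(size F), cyc_arc T (nth [::] F i) x y.
  move=> x y /Hcov [c cF Hc]; have cI : index c F < size F by rewrite index_mem.
  exists (Ordinal cI) => /=.
  by rewrite nth_index.
have Hsub : {subset nth [::] F k <= SV T a}.
  move=> v vk; rewrite inE.
  pose f (u : T) := if [pick i : 'I_(size F) | cyc_arc T (nth [::] F i) v u] is Some i
              then next (nth [::] F i) u else u.
  have Key : forall u, a v u -> exists i : 'I_(size F),
      [/\ cyc_arc T (nth [::] F i) v u, f u = next (nth [::] F i) u,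
          v \in nth [::] F i & f u \in nth [::] F i].
    move=> u avu; rewrite /f; case: pickP => [i Hi | Hn].
      have /andP [vi /eqP nv] := Hi.
      exists i; split => //.
      by rewrite mem_next -nv mem_next.
    by have [i Hi] := Hex _ _ avu; have := Hn i; rewrite Hi.
  have Props : forall u, a v u -> f u != v /\ f u \in Nout2 T a v.
    move=> u avu; have [i [/andP [vi /eqP nv] fu _ fi]] := Key u avu.
    have [_ _ cyc] := Hcyc i.
    have ui : u \in nth [::] F i by rewrite -nv mem_next.
    have auf : a u (f u) by rewrite fu; apply: next_cycle.
    have fv : f u != v.
      by apply/eqP => E; move: auf; rewrite E => /Hasym; rewrite avu.
    split => //; rewrite !inE fv andbT; apply/andP; split.
      apply/negP => avf; have [j /andP [vj /eqP nj]] := Hex _ _ avf.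
      have fj : f u \in nth [::] F j by rewrite -nj mem_next.
      have Eij : i = j.
        have vf : v != f u by rewrite eq_sym.
        have H := @uniq_idx_aux _ _ _ i j v (f u) Hm (@inN_aux _ _ k i v vk vi) (@inN_aux _ _ k j v vk vj) vf vi fi vj fj. exact H.
      by subst j; move: auf; rewrite -nj nv (negbTE (Hloop u)).
    by apply/existsP; exists u; rewrite inE avu auf.
  have Hinj : {in Nout T a v &, injective f}.
    move=> u u'; rewrite !inE => avu avu' E.
    have [i [/andP [vi /eqP nv] _ _ fi]] := Key u avu.
    have [j [/andP [vj /eqP nv'] _ _ fj]] := Key u' avu'.
    rewrite -E in fj.
    have Eij : i = j.
      have vf : v != f u by rewrite eq_sym; case: (Props u avu).
      exact: (@uniq_idx_aux _ _ _ i j v (f u) Hm (@inN_aux _ _ k i v vk vi) (@inN_aux _ _ k j v vk vj) vf vi fi vj fj).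
    by subst j; rewrite -nv -nv'.
  rewrite -(card_in_imset Hinj); apply: subset_leq_card.
  apply/subsetP => w /imsetP [u]; rewrite inE => avu ->.
  by case: (Props u avu).
split => //.
have [ne _ _] := Hcyc k.
case E: (nth [::] F k) ne => [|x s] // _.
apply/set0Pn; exists x; apply: Hsub; by rewrite E mem_head.
Qed.
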